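(* Let $p\ge2$ be an integer and let $f\in\mathcal{R}$ be nonzero with $U_pf=\lambda_pf$ for some $\lambda_p\neq0$, and let $L$ be the level of $f$ (all poles of such $f$ are roots of unity). Then for every positive integer $m$, $f$ is an eigenfunction of $U_{p+mL}$, i.e. $U_{p+mL}f=\lambda_{p+mL}f$ for some real $\lambda_{p+mL}$. In addition, $f$ is an eigenfunction of $U_q$ for infinitely many primes $q$.
   Context: $\mathcal{R}$ denotes the real vector space of rational functions $f(x)=A(x)/B(x)$ with $A,B\in\mathbb{R}[x]$, $B(0)\neq 0$ and $\deg A<\deg B$. For $f\in\mathcal{R}$ with Taylor expansion $f(x)=\sum_{n\ge0}a_nx^n$ at $0$ and a positive integer $q$, $U_qf(x)=\sum_{n\ge 0}a_{qn}x^n$. If all poles of $f$ are roots of unity, the level of $f$ is the least common multiple of the orders of these roots of unity. *)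

(* Defs.v *)
From mathcomp Require Import all_boot all_order all_algebra.
From mathcomp Require Import reals.
From mathcomp Require Import complex.
Set Implicit Arguments. Unset Strict Implicit. Unset Printing Implicit Defensive.
Import Order.TTheory GRing.Theory Num.Theory.
Local Open Scope ring_scope.

Section RatFun.
Variable R : realType.
(* f = A / B with B(0) <> 0; its Taylor coefficients a_n at 0 are the unique
   sequence with B * (sum a_n x^n) = A as formal power series, i.e.
   a_n = (A_n - sum_{k=1}^n B_k a_{n-k}) / B_0. *)
Fixpoint taylor_coefs (A B : {poly R}) (n : nat) : seq R :=
  match n with
  | 0 => [:: A`_0 / B`_0]
  | n'.+1 => let s := taylor_coefs A B n' in
      rcons s ((A`_n - \sum_(1 <= k < n.+1) B`_k * s`_(n - k)) / B`_0)
  end.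

Definition taylor (A B : {poly R}) (n : nat) : R := (taylor_coefs A B n)`_n.

(* U_q f = lam * f, compared coefficientwise: a_{q n} = lam a_n. *)
Definition eigenU (q : nat) (A B : {poly R}) (lam : R) : Prop :=
  forall n : nat, taylor A B (q * n)%N = lam * taylor A B n.

Definition is_pole (A B : {poly R}) (z : R[i]) : Prop :=
  root (map_poly (fun x : R => (x%:C)%C) (B %/ gcdp A B)) z.

Definition is_level (A B : {poly R}) (L : nat) : Prop :=
  (0 < L)%N /\
  (forall (z : R[i]) (n : nat), is_pole A B z -> n.-primitive_root z -> (n %| L)%N) /\
  (forall M : nat, (0 < M)%N ->
     (forall (z : R[i]) (n : nat), is_pole A B z -> n.-primitive_root z -> (n %| M)%N) ->
     (L <= M)%N).
End RatFun.

(* Main.v *)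
Require Import Defs.
From mathcomp Require Import all_boot all_order all_algebra.
From mathcomp Require Import reals complex.
From mathcomp Require Import ring.
From mathcomp Require cyclotomic finfield.
From Stdlib Require Import Classical.
Import Order.TTheory GRing.Theory Num.Theory.
Local Open Scope ring_scope.

Section Conv.
Variable K : fieldType.
Implicit Types (P Q S : {poly K}) (a b : nat -> K).

Definition conv P a (n : nat) : K := \sum_(i < n.+1) P`_i * a (n - i)%N.
Definition pseq P : nat -> K := fun n => P`_n.
Definition trunc a (n : nat) : {poly K} := \poly_(i < n.+1) a i.

Lemma coefM_eq P (X Y : {poly K}) n :
  (forall m, (m <= n)%N -> X`_m = Y`_m) -> (P * X)`_n = (P * Y)`_n.
Proof.
move=> H; rewrite !coefM; apply: eq_bigr => i _; rewrite H //.
exact: leq_subr.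
Qed.

Lemma conv_trunc P a n : conv P a n = (P * trunc a n)`_n.
Proof.
rewrite coefM /conv; apply: eq_bigr => i _.
by rewrite coef_poly ltnS leq_subr.
Qed.

Lemma conv_mul P Q a n : conv (P * Q) a n = conv P (conv Q a) n.
Proof.
rewrite !conv_trunc -mulrA; apply: coefM_eq => m lemn.
rewrite coef_poly ltnS lemn conv_trunc; apply: coefM_eq => k lekm.
rewrite !coef_poly !ltnS lekm (leq_trans lekm lemn) //.
Qed.

Lemma conv_pseq P Q n : conv P (pseq Q) n = (P * Q)`_n.
Proof. by rewrite coefM. Qed.

Lemma conv1 a n : conv 1 a n = a n.
Proof.
rewrite /conv big_ord_recl coef1 /= mul1r subn0 big1 ?addr0 // => i _.
by rewrite coef1 /= mul0r.
Qed.

Lemma convC c a n : conv c%:P a n = c * a n.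
Proof.
rewrite /conv big_ord_recl coefC /= subn0 big1 ?addr0 // => i _.
by rewrite coefC /= mul0r.
Qed.

Lemma convX a n : conv 'X a n = if n is n'.+1 then a n' else 0.
Proof.
case: n => [|n]; first by rewrite /conv big_ord1 coefX mul0r.
rewrite /conv big_ord_recl coefX mul0r add0r big_ord_recl coefX mul1r /=.
rewrite subSS subn0 big1 ?addr0 // => i _; by rewrite coefX mul0r.
Qed.

Lemma convDl P Q a n : conv (P + Q) a n = conv P a n + conv Q a n.
Proof. by rewrite /conv -big_split; apply: eq_bigr => i _; rewrite coefD mulrDl. Qed.

Lemma convBl P Q a n : conv (P - Q) a n = conv P a n - conv Q a n.
Proof.
by rewrite /conv -sumrB; apply: eq_bigr => i _; rewrite coefB mulrBl.
Qed.

Lemma convZl c P a n : conv (c *: P) a n = c * conv P a n.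
Proof. by rewrite /conv mulr_sumr; apply: eq_bigr => i _; rewrite coefZ mulrA. Qed.

Lemma convDr P a b n : conv P (fun k => a k + b k) n = conv P a n + conv P b n.
Proof. by rewrite /conv -big_split; apply: eq_bigr => i _; rewrite mulrDr. Qed.

Lemma convBr P a b n : conv P (fun k => a k - b k) n = conv P a n - conv P b n.
Proof. by rewrite /conv -sumrB; apply: eq_bigr => i _; rewrite mulrBr. Qed.

Lemma convZr c P a n : conv P (fun k => c * a k) n = c * conv P a n.
Proof. by rewrite /conv mulr_sumr; apply: eq_bigr => i _; rewrite mulrCA. Qed.

Lemma conv_ext P a b : a =1 b -> forall n, conv P a n = conv P b n.
Proof. by move=> ab n; apply: eq_bigr => i _; rewrite ab. Qed.

Lemma conv_cancel0 P a : P`_0 != 0 -> (forall n, conv P a n = 0) -> forall n, a n = 0.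
Proof.
move=> P0 H; elim/ltn_ind => n IH.
have := H n; rewrite /conv big_ord_recl subn0 big1 ?addr0.
  by move/eqP; rewrite mulf_eq0 (negbTE P0) /= => /eqP.
move=> i _; rewrite IH ?mulr0 //=.
by rewrite subnSK ?leq_subr // ltn_ord.
Qed.

Lemma conv_cancel P a b : P`_0 != 0 -> (forall n, conv P a n = conv P b n) ->
  forall n, a n = b n.
Proof.
move=> P0 H n; apply/eqP; rewrite -subr_eq0; apply/eqP.
apply: (@conv_cancel0 P (fun k => a k - b k)) P0 _ n => m.
by rewrite convBr H subrr.
Qed.

Lemma convXn T a m : conv ('X^T) a m = if (T <= m)%N then a (m - T)%N else 0.
Proof.
elim: T a m => [|T IH] a m; first by rewrite expr0 conv1 subn0.
rewrite exprS conv_mul convX; case: m => [|m]; first by [].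
by rewrite IH ltnS subSS.
Qed.

Lemma conv_comp S T r a n : (r < T)%N ->
  conv (S \Po 'X^T) a (r + T * n) = conv S (fun k => a (r + T * k)%N) n.
Proof.
move=> rT; elim/poly_ind: S n => [|S c IH] n.
  by rewrite comp_poly0 /conv !big1 // => i _; rewrite coef0 mul0r.
rewrite (comp_poly_MXaddC c S) convDl convDl convC convC.
congr (_ + _); rewrite [_ * 'X^T]mulrC [conv ('X^T * _) _ _]conv_mul convXn [S * 'X]mulrC [conv ('X * _) _ _]conv_mul convX.
case: n => [|n]; first by rewrite muln0 addn0 leqNgt rT.
rewrite -IH; have -> : (T <= r + T * n.+1)%N by rewrite mulnS addnCA leq_addr.
by congr conv; rewrite mulnS addnCA addKn.
Qed.

End Conv.
Arguments conv {K}.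
Arguments pseq {K}.
Arguments trunc {K}.

Lemma conv_map (K F : fieldType) (f : {rmorphism K -> F}) (P : {poly K}) (a : nat -> K) n :
  f (conv P a n) = conv (map_poly f P) (fun k => f (a k)) n :> F.
Proof. by rewrite rmorph_sum; apply: eq_bigr => i _; rewrite rmorphM coef_map. Qed.



Section Taylor.
Variable R : realType.
Variables A B : {poly R}.

Lemma size_tc n : size (taylor_coefs A B n) = n.+1.
Proof. by elim: n => [|n IH] //=; rewrite size_rcons IH. Qed.

Lemma tc_prefix n m : (m <= n)%N -> (taylor_coefs A B n)`_m = taylor A B m.
Proof.
elim: n => [|n IH]; first by rewrite leqn0 => /eqP ->.
rewrite leq_eqVlt => /orP [/eqP -> //|].
rewrite ltnS => lemn; rewrite /= nth_rcons size_tc ltnS lemn; exact: IH.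
Qed.

Lemma taylor_conv n : B`_0 != 0 -> conv B (taylor A B) n = A`_n.
Proof.
move=> B0; case: n => [|n].
  by rewrite /conv big_ord1 /taylor /= mulrC divfK.
rewrite /conv big_ord_recl subn0.
have -> : taylor A B n.+1 = (A`_n.+1 - \sum_(1 <= k < n.+2) B`_k * (taylor A B (n.+1 - k)%N)) / B`_0.
  rewrite /taylor /= nth_rcons size_tc ltnn eqxx; congr ((_ - _) / _).
  rewrite big_nat_cond [RHS]big_nat_cond; apply: eq_bigr => k /andP [/andP [k1 kn] _].
  by rewrite tc_prefix // leq_subLR -add1n leq_add2r.
rewrite mulrC divfK // big_add1 /= big_mkord.
by rewrite subrK.
Qed.
End Taylor.

Lemma iter_gh (T : Type) (g h : T -> T) (P : T -> Prop) :
  (forall y, P y -> P (g y)) -> (forall y, P y -> h (g y) = y) ->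
  forall k y, P y -> iter k h (iter k g y) = y /\ P (iter k g y).
Proof.
move=> Pg hg; elim=> [|k IH] y Py //.
have [E Pk] := IH y Py; split; last by rewrite /=; exact: Pg.
by rewrite iterSr /= hg.
Qed.

Lemma perm_pow (T : eqType) (x0 : T) (rs : seq T) (h : T -> T) :
  (forall z, z \in rs -> z \in map h rs) ->
  forall z, z \in rs -> exists2 k, (0 < k)%N & iter k h z = z.
Proof.
move=> Hs z zin.
pose g y := nth x0 rs (index y (map h rs)).
have gin y : y \in rs -> g y \in rs.
  by move=> yin; rewrite mem_nth // -(size_map h) index_mem Hs.
have hg y : y \in rs -> h (g y) = y.
  move=> yin; rewrite /g -(nth_map x0 (h x0)); first by rewrite nth_index // Hs.
  by rewrite -(size_map h) index_mem Hs.
pose s := mkseq (fun k => iter k g z) (size rs).+1.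
have sub : {subset s <= rs}.
  move=> y /mapP [k _ ->]; elim: k => [|k IH] //=; exact: gin.
have nu : ~~ uniq s.
  apply/negP => us; have := uniq_leq_size us sub; by rewrite size_mkseq ltnn.
have [i [j [ij js E]]] := uniqPn z nu.
rewrite size_mkseq in js.
rewrite !nth_mkseq ?(ltn_trans ij js) // in E.
exists (j - i)%N; first by rewrite subn_gt0.
have [E1 _] := @iter_gh _ g h (fun y => y \in rs) gin hg j z zin.
have [E2 _] := @iter_gh _ g h (fun y => y \in rs) gin hg i z zin.
have : iter j h (iter i g z) = z by rewrite E.
by rewrite -{1}(subnK (ltnW ij)) iterD E2.
Qed.

Lemma perm_pow_unif (T : eqType) (x0 : T) (rs : seq T) (h : T -> T) :
  (forall z, z \in rs -> z \in map h rs) ->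
  forall s : seq T, {subset s <= rs} -> exists2 K, (0 < K)%N & forall z, z \in s -> iter K h z = z.
Proof.
move=> Hs; elim=> [|z s IH] sub; first by exists 1%N.
have [K1 K1p HK1] : exists2 K, (0 < K)%N & forall z, z \in s -> iter K h z = z.
  by apply: IH => y yin; apply: sub; rewrite inE yin orbT.
have [K2 K2p HK2] := @perm_pow T x0 rs h Hs z (sub z (mem_head z s)).
have fix_mul K m y : iter K h y = y -> iter (m * K) h y = y.
  move=> Ey; elim: m => [|m IHm] //; by rewrite mulSn iterD IHm Ey.
exists (K1 * K2)%N; first by rewrite muln_gt0 K1p.
move=> y; rewrite inE => /orP [/eqP -> | yin]; first exact: fix_mul.
by rewrite mulnC; apply: fix_mul; apply: HK1.
Qed.

Lemma iter_exp (F : fieldType) (p k : nat) (z : F) :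
  iter k (fun w => w ^+ p) z = z ^+ (p ^ k).
Proof. by elim: k => [|k IH] /=; rewrite ?expr1 // IH -exprM expnSr. Qed.

Section Roots.
Variable F : closedFieldType.

Lemma prod_comp_Xn (s : seq F) p :
  \prod_(z <- s) ('X - z%:P) %| (\prod_(z <- s) ('X - (z ^+ p)%:P)) \Po 'X^p.
Proof.
elim: s => [|z s IH]; first by rewrite !big_nil comp_polyC dvdpp.
rewrite !big_cons comp_polyM; apply: dvdp_mul => //.
rewrite comp_polyB comp_polyX comp_polyC dvdp_XsubCl /root !hornerE.
by rewrite subrr.
Qed.

Lemma roots_pow (P Q : {poly F}) (a : nat -> F) (p : nat) (lam : F) :
  (0 < p)%N -> lam != 0 -> Q`_0 != 0 -> coprimep P Q ->
  (forall n, conv Q a n = P`_n) -> (forall n, a (p * n)%N = lam * a n) ->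
  exists2 K, (0 < K)%N & forall z, root Q z -> z ^+ (p ^ K) = z.
Proof.
move=> p0 lam0 Q0 cPQ HQ Ha.
have Qn0 : Q != 0 by apply: contraNneq Q0 => ->; rewrite coef0.
have lc0 : lead_coef Q != 0 by rewrite lead_coef_eq0.
have [rs Qe] := closed_field_poly_normal Q.
set S := \prod_(z <- rs) ('X - (z ^+ p)%:P).
have dQS : Q %| S \Po 'X^p by rewrite Qe dvdpZl // prod_comp_Xn.
set N := (S \Po 'X^p) %/ Q.
have SN : S \Po 'X^p = N * Q by rewrite divpK.
set U := \poly_(i < size (N * P)) (N * P)`_(p * i)%N.
have cSa n : conv S a n = (lam^-1 *: U)`_n.
  have : conv S (fun k => a (p * k)%N) n = (N * P)`_(p * n)%N.
    rewrite (@conv_ext _ _ _ (fun k => a (0 + p * k)%N)); last by move=> k; rewrite add0n.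
    rewrite -(add0n (p * n)%N) -conv_comp // SN conv_mul.
    rewrite (@conv_ext _ _ _ (pseq P)) //; exact: conv_pseq.
  rewrite (@conv_ext _ _ _ (fun k => lam * a k)) // convZr => E.
  rewrite coefZ coef_poly -E.
  case: ltnP => hs; first by rewrite mulKf.
  have : lam * conv S a n = 0.
    by rewrite E nth_default //; apply: leq_trans hs _; exact: leq_pmull.
  by move/eqP; rewrite mulr0 mulf_eq0 (negbTE lam0) /= => /eqP.
have SPQ : S * P = Q * (lam^-1 *: U).
  apply/polyP => n.
  transitivity (conv S (conv Q a) n).
    by rewrite -conv_pseq; apply: conv_ext => k; rewrite HQ.
  rewrite -conv_mul mulrC conv_mul (@conv_ext _ Q _ _ cSa); exact: conv_pseq.
have dQS2 : Q %| S.
  have cQP : coprimep Q P by rewrite coprimep_sym.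
  by rewrite -(Gauss_dvdpl S cQP) SPQ dvdp_mulIl.
have Hs : forall z, z \in rs -> z \in map (fun w => w ^+ p) rs.
  move=> z zin.
  have rQ : root Q z by rewrite Qe rootZ // root_prod_XsubC.
  have : root S z.
    by rewrite -(divpK dQS2) /root hornerM (eqP rQ) mulr0.
  by rewrite /S -(big_map (fun w => w ^+ p) xpredT (fun y => 'X - y%:P)) root_prod_XsubC.
have [K Kp HK] := @perm_pow_unif F 0 rs (fun w => w ^+ p) Hs rs (fun y (yin : y \in rs) => yin).
exists K => // z rQ.
rewrite -iter_exp HK //.
by move: rQ; rewrite Qe rootZ // root_prod_XsubC.
Qed.
End Roots.

Section QP.
Variable R : realType.
Implicit Types (P Q G : {poly R}).

Definition ev Q : nat -> R := fun k => Q.[k%:R].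
Definition Dl Q : {poly R} := Q - (Q \Po ('X - 1)).
Definition iterD (e : nat) Q := iter e (fun Q => - Dl Q) Q.
Definition Ff (e : nat) : {poly R} := \prod_(i < e) ('X + (i%:R)%:P).

Lemma convXm1 (u : nat -> R) n :
  conv ('X - 1) u n = (if n is n'.+1 then u n' else 0) - u n.
Proof. by rewrite convBl convX conv1. Qed.

Lemma L1 Q n : conv ('X - 1) (ev Q) n = ev (- Dl Q) n + ((- Q.[-1])%:P)`_n.
Proof.
rewrite convXm1 /ev /Dl coefC !hornerE horner_comp !hornerE.
case: n => [|k] /=; first by rewrite sub0r add0r; ring.
rewrite addr0 -natr1 addrK; ring.
Qed.

Lemma L2 e Q : exists2 P : {poly R}, (size P <= e)%N &
  forall n, conv (('X - 1)^+e) (ev Q) n = ev (iterD e Q) n + P`_n.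
Proof.
elim: e => [|e [P sP HP]].
  exists (0 : {poly R}); first by rewrite size_poly0.
  by move=> n; rewrite expr0 conv1 coef0 addr0.
exists ((- (iterD e Q).[-1])%:P + ('X - 1) * P).
  rewrite (leq_trans (size_add _ _)) // geq_max (leq_trans (size_polyC_leq1 _)) //=.
  by rewrite (leq_trans (size_mul_leq _ _)) // size_XsubC.
move=> n; rewrite exprS conv_mul.
rewrite (@conv_ext _ _ _ (fun k => ev (iterD e Q) k + (pseq P) k)) //.
by rewrite convDr L1 conv_pseq coefD addrA.
Qed.

Lemma DlZ c Q : Dl (c *: Q) = c *: Dl Q.
Proof. by rewrite /Dl comp_polyZ scalerBr. Qed.

Lemma iterDZ e c Q : iterD e (c *: Q) = c *: iterD e Q.
Proof. by elim: e => [|e IH] //=; rewrite IH DlZ scalerN. Qed.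

Lemma comp_prod (I : Type) (r : seq I) (F : I -> {poly R}) q :
  (\prod_(i <- r) F i) \Po q = \prod_(i <- r) (F i \Po q).
Proof.
elim: r => [|i r IH]; first by rewrite !big_nil comp_polyC.
by rewrite !big_cons comp_polyM IH.
Qed.

Lemma DlFf e : Dl (Ff e.+1) = (e.+1)%:R *: Ff e.
Proof.
have E1 : Ff e.+1 = Ff e * ('X + (e%:R)%:P) by rewrite /Ff big_ord_recr.
have E2 : Ff e.+1 \Po ('X - 1) = ('X - 1) * Ff e.
  rewrite /Ff comp_prod big_ord_recl /= comp_polyD comp_polyX comp_polyC addr0.
  congr (_ * _); apply: eq_bigr => i _.
  rewrite comp_polyD comp_polyX comp_polyC /bump /= add1n -natr1 polyCD; ring.
rewrite /Dl E2 {1}E1 -mul_polyC -natr1 polyCD; ring.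
Qed.

Lemma iterDFf e : iterD e (Ff e) = ((-1) ^+ e * (e`!)%:R)%:P.
Proof.
elim: e => [|e IH]; first by rewrite /iterD /Ff /= big_ord0 expr0 mul1r.
rewrite /iterD iterSr -/(iterD _ _) DlFf -scaleNr iterDZ IH -mul_polyC -polyCM.
by congr (_%:P); rewrite factS natrM exprS; ring.
Qed.

Lemma QP e : forall (u : nat -> R) P, (forall n, conv (('X - 1)^+e) u n = P`_n) ->
  (size P <= e)%N -> exists Q, forall k, u k = Q.[k%:R].
Proof.
elim: e => [|e IH] u P HP sP.
  exists (0 : {poly R}) => k; move: sP; rewrite leqn0 size_poly_eq0 => /eqP P0.
  by rewrite -conv1 HP P0 coef0 horner0.
set w := conv (('X - 1)^+e) u.
have Hw n : conv ('X - 1) w n = P`_n.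
  by rewrite -HP exprS conv_mul.
have wc j : w (e + j)%N = w e.
  elim: j => [|j IHj]; first by rewrite addn0.
  have := Hw (e + j).+1; rewrite convXm1 nth_default; last first.
    by apply: leq_trans sP _; rewrite ltnS leq_addr.
  by move/eqP; rewrite subr_eq0 => /eqP E; rewrite addnS -E.
set c := w e.
have k0 : (-1) ^+ e * (e`!)%:R != 0 :> R.
  by rewrite mulf_neq0 ?signr_eq0 // pnatr_eq0 -lt0n fact_gt0.
set G := (c / ((-1) ^+ e * (e`!)%:R)) *: Ff e.
have [P1 sP1 HP1] := L2 e G.
have iG : iterD e G = c%:P.
  by rewrite /G iterDZ iterDFf -mul_polyC -polyCM divfK.
pose v k := u k - G.[k%:R].
pose P2 := \poly_(i < e) (w i - (c + P1`_i)).
have Hv n : conv (('X - 1)^+e) v n = P2`_n.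
  rewrite convBr -/(w n) (@conv_ext _ _ (fun k => G.[k%:R]) (ev G)) // HP1 iG.
  rewrite /ev hornerC coef_poly; case: ltnP => // len.
  rewrite nth_default ?(leq_trans sP1) // addr0 -(subnKC len) wc subrr //.
have [Q' HQ'] := IH v P2 Hv (size_poly _ _).
by exists (Q' + G) => k; rewrite hornerD -HQ' /v subrK.
Qed.
End QP.

Section Final.
Variable R : realType.

Lemma poly_inf_roots (D : {poly R}) (r T : nat) : (0 < T)%N ->
  (forall k, D.[(r + T * k)%:R] = 0) -> D = 0.
Proof.
move=> T0 H; apply/eqP; apply: contraT => D0.
pose rs := [seq ((r + T * k)%N)%:R : R | k <- iota 0 (size D)].
have := max_poly_roots D0 (rs := rs).
rewrite size_map size_iota ltnn; apply.
  by apply/allP => x /mapP [k _ ->]; rewrite /root H.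
rewrite map_inj_uniq ?iota_uniq // => k1 k2 /eqP.
rewrite eqr_nat eqn_add2l eqn_mul2l eqn0Ngt T0 /= => /eqP //.
Qed.

Lemma scale_eval (R0 : {poly R}) (c x : R) :
  (\poly_(i < size R0) (R0`_i * c ^+ i)).[x] = R0.[c * x].
Proof.
rewrite (horner_coef_wide _ (size_poly _ _)) horner_coef.
apply: eq_bigr => i _; rewrite coef_poly ltn_ord exprMn mulrA //.
Qed.

Lemma step1 (a : nat -> R) (T p' r : nat) (lam' : R) (R0 : {poly R}) :
  (0 < T)%N -> (r < T)%N -> (p' %% T = 1 %% T)%N ->
  (forall m, (m %% T = r)%N -> a m = R0.[m%:R]) ->
  (forall n, a (p' * n)%N = lam' * a n) ->
  forall i, R0`_i != 0 -> lam' = (p'%:R) ^+ i.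
Proof.
move=> T0 rT Hp HR Ha.
set Rs := \poly_(i < size R0) (R0`_i * (p'%:R) ^+ i).
have Dz : Rs - lam' *: R0 = 0.
  apply: (@poly_inf_roots _ r T T0) => k.
  have mk : ((r + T * k) %% T = r)%N by rewrite addnC mulnC modnMDl modn_small.
  rewrite hornerD hornerN hornerZ scale_eval -natrM -HR -?HR // ?Ha ?subrr //.
  by rewrite -modnMml Hp modnMml mul1n mk.
move=> i Ri; apply/eqP; rewrite eq_sym -subr_eq0.
move/polyP: Dz => /(_ i); rewrite coefB coefZ coef_poly coef0.
case: ltnP => [_|hs]; last by rewrite nth_default ?eqxx in Ri.
move=> E; have : R0`_i * ((p'%:R) ^+ i - lam') == 0.
  by rewrite mulrBr [R0`_i * lam']mulrC E.
by rewrite mulf_eq0 (negbTE Ri).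
Qed.

Lemma eig_final (a : nat -> R) (T p' p q : nat) (lam' lam : R) :
  (0 < T)%N -> (1 < p')%N -> (p' %% T = 1 %% T)%N -> (0 < p)%N -> (q %% T = p %% T)%N ->
  (forall r, (r < T)%N -> exists R0 : {poly R}, forall m, (m %% T = r)%N -> a m = R0.[m%:R]) ->
  (forall n, a (p' * n)%N = lam' * a n) -> (forall n, a (p * n)%N = lam * a n) ->
  exists mu, forall n, a (q * n)%N = mu * a n.
Proof.
move=> T0 p'1 Hp' p0 Hq HR Ha' Ha.
have [d Hd] : exists d, forall r, (r < T)%N -> exists c : R,
    forall m, (m %% T = r)%N -> a m = c * (m%:R) ^+ d.
  have key : forall d, (forall i, lam' = (p'%:R) ^+ i -> i = d) ->
      forall r, (r < T)%N -> exists c : R, forall m, (m %% T = r)%N -> a m = c * (m%:R) ^+ d.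
    move=> d Hi r rT; have [R0 HR0] := HR r rT.
    have S1 := @step1 a T p' r lam' R0 T0 rT Hp' HR0 Ha'.
    have R0E : R0 = R0`_d *: 'X^d.
      apply/polyP => i; rewrite coefZ coefXn.
      have [->|nid] := eqVneq i d; first by rewrite mulr1.
      rewrite mulr0; apply/eqP; apply/negP => /negP Ri0.
      by move: nid; rewrite (Hi i (S1 i Ri0)) eqxx.
    by exists R0`_d => m Hm; rewrite HR0 // {1}R0E hornerZ hornerXn.
  case: (classic (exists d, lam' = (p'%:R) ^+ d)) => [[d Hd]|nd].
    exists d; apply: key => i Hi; apply: (expnI p'1); apply/eqP.
    by rewrite -(eqr_nat R) !natrX -Hd -Hi.
  exists 0%N; apply: key => i Hi; exfalso; apply: nd; by exists i.
exists (lam * (q%:R / p%:R) ^+ d) => n.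
have rT : ((p * n) %% T < T)%N by rewrite ltn_mod.
have [c Hc] := Hd _ rT.
have qm : ((q * n) %% T = (p * n) %% T)%N by rewrite -modnMml Hq modnMml.
rewrite (Hc _ qm) [RHS]mulrAC -Ha (Hc _ erefl) !natrM !exprMn.
have pn0 : (p%:R : R) != 0 by rewrite pnatr_eq0 -lt0n.
rewrite exprVn; field; exact: expf_neq0.
Qed.
End Final.

Notation Phi := cyclotomic.Cyclotomic.

Lemma Phi_split (T : nat) : (0 < T)%N ->
  exists W : {poly int}, 'X^T - 1 = Phi T * W.
Proof.
move=> T0; rewrite -(cyclotomic.prod_Cyclotomic T0).
rewrite (bigD1_seq T) ?divisors_uniq //; first by eexists.
by rewrite -dvdn_divisors.
Qed.

Lemma Phi_split2 (T m : nat) : (0 < m)%N -> (m < T)%N -> (m %| T)%N ->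
  exists W : {poly int}, 'X^T - 1 = ('X^m - 1) * (Phi T * W).
Proof.
move=> m0 mT mdT; have T0 : (0 < T)%N by apply: leq_trans mT.
rewrite -(cyclotomic.prod_Cyclotomic T0) -(cyclotomic.prod_Cyclotomic m0).
rewrite (bigID (fun d => d %| m)%N) /=.
have -> : \prod_(i <- divisors T | (i %| m)%N) Phi i = \prod_(i <- divisors m) Phi i.
  rewrite -big_filter; apply: perm_big; apply: uniq_perm.
  - by rewrite filter_uniq ?divisors_uniq.
  - exact: divisors_uniq.
  move=> d; rewrite mem_filter -!dvdn_divisors //.
  by apply/andP/idP => [[]//|dm]; split => //; apply: dvdn_trans mdT.
rewrite -[X in _ * X]big_filter [X in _ * X](bigD1_seq T) ?filter_uniq ?divisors_uniq //=.
  by eexists.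
rewrite mem_filter -dvdn_divisors // dvdnn andbT.
by apply/negP => /(dvdn_leq m0); rewrite leqNgt mT.
Qed.

Lemma cyclo_root_prim (F : fieldType) (T : nat) (y : F) : (0 < T)%N -> (T%:R != 0 :> F) ->
  root (map_poly (intr : int -> F) (Phi T)) y -> T.-primitive_root y.
Proof.
move=> T0 TF rP.
have mapX n : map_poly (intr : int -> F) ('X^n - 1) = 'X^n - 1.
  by rewrite rmorphB /= rmorph1 map_polyXn.
have yT : y ^+ T = 1.
  have [W EW] := @Phi_split T T0.
  have : (map_poly (intr : int -> F) ('X^T - 1)).[y] = 0.
    by rewrite EW rmorphM /= hornerM (eqP rP) mul0r.
  by rewrite mapX !hornerE => /eqP; rewrite subr_eq0 => /eqP.
have [m pm mT] := prim_order_exists T0 yT.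
have m0 := prim_order_gt0 pm.
have [mE|mlt] := eqVneq m T; first by rewrite -mE.
have mT' : (m < T)%N by rewrite ltn_neqAle mlt dvdn_leq.
exfalso; have [W EW] := @Phi_split2 T m m0 mT' mT.
set G : {poly F} := \sum_(i < T %/ m) ('X^m) ^+ i.
have EG : ('X^T - 1 : {poly F}) = ('X^m - 1) * G.
  by rewrite -subrX1 -exprM mulnC divnK.
have nz : ('X^m - 1 : {poly F}) != 0 by rewrite -size_poly_eq0 size_Xn_sub_1.
have EF : map_poly (intr : int -> F) (Phi T * W) = G.
  by apply: (mulfI nz); rewrite -EG -(mapX T) EW !rmorphM /= mapX.
have : G.[y] = 0 by rewrite -EF rmorphM /= hornerM (eqP rP) mul0r.
rewrite /G horner_sum (eq_bigr (fun _ => 1)); last first.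
  by move=> i _; rewrite hornerE hornerXn (prim_expr_order pm) expr1n.
rewrite sumr_const card_ord => H.
by move/negP: TF; apply; rewrite -(divnK mT) natrM H mul0r.
Qed.

Lemma cyclo_root_unity (F : fieldType) (T : nat) (y : F) : (0 < T)%N ->
  root (map_poly (intr : int -> F) (Phi T)) y -> y ^+ T = 1.
Proof.
move=> T0 rP.
have [W EW] := @Phi_split T T0.
have : (map_poly (intr : int -> F) ('X^T - 1)).[y] = 0.
  by rewrite EW rmorphM /= hornerM (eqP rP) mul0r.
rewrite rmorphB /= rmorph1 map_polyXn !hornerE => /eqP.
by rewrite subr_eq0 => /eqP.
Qed.

Lemma prime_1mod (T N : nat) : (0 < T)%N ->
  exists q, [/\ (N < q)%N, prime q & (q %% T = 1 %% T)%N].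
Proof.
move=> T0.
set M := (T * N`!)%N.
have M0 : (0 < M)%N by rewrite muln_gt0 T0 fact_gt0.
set P := Phi T.
have Pn0 : P != 0 by apply: monic_neq0; apply: cyclotomic.Cyclotomic_monic.
have sP : (2 <= size P)%N by rewrite cyclotomic.size_Cyclotomic ltnS totient_gt0.
have P2n0 : P ^+ 2 - 1 != 0.
  rewrite subr_eq0; apply/negP => /eqP E.
  have := size_exp P 2; rewrite E size_poly1 /=.
  by case: (size P) sP => [|[|s]].
set W := P * (P ^+ 2 - 1).
have Wn0 : W != 0 by rewrite mulf_neq0.
pose rs := [seq ((k.+1 * M)%N)%:Z | k <- iota 0 (size W)].
have : ~~ all (root W) rs.
  apply/negP => allr; suff : false by []; have := max_poly_roots Wn0 allr.
  rewrite size_map size_iota ltnn; apply.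
  rewrite map_inj_uniq ?iota_uniq // => k1 k2 /eqP.
  by rewrite eqz_nat eqn_mul2r eqn0Ngt M0 /= => /eqP [].
case/allPn => x /mapP [k _ ->] {x} nr.
set X := (k.+1 * M)%N.
set v := P.[X%:Z].
have Wv : W.[X%:Z] != 0 by [].
have v0 : v != 0 by apply: contraNneq Wv; rewrite /W hornerM -/v => ->; rewrite mul0r.
have v21 : v ^+ 2 != 1.
  by apply: contraNneq Wv => E; rewrite /W hornerM !hornerE -/v E subrr mulr0.
have v1 : (1 < `|v|%N)%N.
  case: (ltnP 1 `|v|%N) => // h; exfalso.
  move: h; rewrite leq_eqVlt ltnS leqn0 absz_eq0 (negbTE v0) orbF => /eqP h1.
  by move/negP: v21; apply; rewrite (intEsign v) h1 mulr1 sqrr_sign.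
set q := pdiv `|v|%N.
have qp : prime q by apply: pdiv_prime.
have qv : (q %| `|v|%N)%N by apply: pdiv_dvd.
have chq := pchar_Fp qp.
set y : 'F_q := X%:R.
have rP : root (map_poly (intr : int -> 'F_q) P) y.
  have -> : y = (X%:Z)%:~R by rewrite /y -natz rmorph_nat.
  rewrite /root horner_map -/v (intEsign v) rmorphM /= rmorph_sign.
  have -> : (`|v|%N%:Z)%:~R = (`|v|%N)%:R :> 'F_q by rewrite -natz rmorph_nat.
  by move: qv; rewrite (dvdn_pcharf chq) => /eqP ->; rewrite mulr0.
have yT := @cyclo_root_unity _ T y T0 rP.
have y0 : y != 0.
  apply/eqP => E; move: yT; rewrite E expr0n eqn0Ngt T0 /= => /eqP.
  by rewrite eq_sym oner_eq0.
have qX : ~~ (q %| X)%N by rewrite (dvdn_pcharf chq).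
have qT : ~~ (q %| T)%N.
  by apply: contra qX => qT; rewrite /X /M mulnCA; apply: dvdn_mulr.
have qN : (N < q)%N.
  rewrite ltnNge; apply: contra qX => qN.
  rewrite /X /M mulnA; apply: dvdn_mull; apply: dvdn_fact; rewrite prime_gt0 // qN.
have TF : (T%:R != 0 :> 'F_q) by rewrite -(dvdn_pcharf chq).
have py := @cyclo_root_prim _ T y T0 TF rP.
have yq : y ^+ q.-1 = 1.
  apply: (mulIf y0); rewrite mul1r -exprSr prednK ?prime_gt0 //.
  by rewrite -{2}(finfield.expf_card y) card_Fp.
exists q; split => //.
have := prim_order_dvd py q.-1; rewrite yq eqxx => /dvdnP [j Ej].
by rewrite -(prednK (prime_gt0 qp)) -addn1 Ej modnMDl.
Qed.

Lemma dvd_XTm1 (F : closedFieldType) (Q : {poly F}) (T : nat) : Q != 0 ->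
  (forall z, root Q z -> z ^+ T = 1) -> exists e, Q %| ('X^T - 1) ^+ e.
Proof.
move=> Qn0 HT; have [rs Qe] := closed_field_poly_normal Q.
have lc0 : lead_coef Q != 0 by rewrite lead_coef_eq0.
exists (size rs); rewrite Qe dvdpZl //.
have : forall z, z \in rs -> z ^+ T = 1.
  by move=> z zin; apply: HT; rewrite Qe rootZ // root_prod_XsubC.
elim: rs {Qe} => [|z rs IH] H; first by rewrite big_nil dvd1p.
rewrite big_cons exprS; apply: dvdp_mul.
  by rewrite dvdp_XsubCl /root !hornerE H ?mem_head // subrr.
by apply: IH => y yin; apply: H; rewrite inE yin orbT.
Qed.

Lemma comp_exp (K : fieldType) (P Q : {poly K}) e : (P ^+ e) \Po Q = (P \Po Q) ^+ e.
Proof.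
elim: e => [|e IH]; first by rewrite !expr0 comp_polyC.
by rewrite !exprS comp_polyM IH.
Qed.

Section Repr.
Variable R : realType.
Variables (a : nat -> R) (D A0 : {poly R}).
Hypotheses (D0 : D`_0 != 0) (HD : forall n, conv D a n = A0`_n)
  (sAD : (size A0 < size D)%N) (A0n0 : A0 != 0).

Lemma repr_T (T : nat) : (0 < T)%N ->
  (forall z : R[i], root (map_poly (real_complex R) D) z -> z ^+ T = 1) ->
  forall r, (r < T)%N -> exists R0 : {poly R}, forall m, (m %% T = r)%N -> a m = R0.[m%:R].
Proof.
move=> T0 HT r rT.
have Dn0 : D != 0 by apply: contraNneq D0 => ->; rewrite coef0.
have mDn0 : map_poly (real_complex R) D != 0 by rewrite map_poly_eq0.
have [e He] := @dvd_XTm1 _ _ T mDn0 HT.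
have mapX : map_poly (real_complex R) (('X^T - 1) ^+ e) = ('X^T - 1) ^+ e.
  by rewrite rmorphXn rmorphB /= rmorph1 map_polyXn.
move: He; rewrite -mapX dvdp_map => He.
set Den := ('X^T - 1 : {poly R}) ^+ e.
set E := Den %/ D.
have EDen : Den = E * D by rewrite divpK.
have XT0 : ('X^T - 1 : {poly R}) != 0 by rewrite -size_poly_eq0 size_Xn_sub_1.
have Den0 : Den != 0 by rewrite expf_neq0.
have En0 : E != 0 by apply: contraNneq Den0; rewrite EDen => ->; rewrite mul0r.
have sDen : size Den = (T * e).+1.
  have := size_exp ('X^T - 1 : {poly R}) e; rewrite size_Xn_sub_1 //= -/Den.
  by move=> h; rewrite -h prednK // lt0n size_poly_eq0 Den0.
have sEA : (size (E * A0)%R <= T * e)%N.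
  have := sDen; rewrite EDen !size_mul // => h.
  rewrite -ltnS -h.
  have sE : (0 < size E)%N by rewrite lt0n size_poly_eq0.
  by move: sE; case: (size E) => // s _; rewrite !addSn /= ltn_add2l.
have convDen n : conv Den a n = (E * A0)`_n.
  by rewrite EDen conv_mul (@conv_ext _ _ _ (pseq A0)) // conv_pseq.
pose u k := a (r + T * k)%N.
pose Pr := \poly_(i < e) (E * A0)`_(r + T * i)%N.
have Hu k : conv (('X - 1) ^+ e) u k = Pr`_k.
  have DenC : Den = (('X - 1) ^+ e) \Po 'X^T.
    by rewrite comp_exp comp_polyB comp_polyX comp_polyC.
  rewrite /u -conv_comp // -DenC convDen coef_poly; case: ltnP => // ek.
  rewrite nth_default //; apply: (leq_trans sEA).
  by apply: leq_trans (leq_addl _ _); rewrite leq_mul2l ek orbT.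
have [Q HQ] := @QP R e u Pr Hu (size_poly _ _).
have TR : (T%:R : R) != 0 by rewrite pnatr_eq0 -lt0n.
exists (Q \Po ((T%:R)^-1 *: ('X - (r%:R)%:P))) => m Hm.
rewrite horner_comp !hornerE.
have Em : m = (r + T * (m %/ T))%N by rewrite {1}(divn_eq m T) Hm addnC mulnC.
rewrite {1}Em -/(u _) HQ; congr (Q.[_]).
by rewrite {2}Em natrD natrM [r%:R + _]addrC addrK mulrA mulVf // mul1r.
Qed.
End Repr.

Lemma iter_eig (R : realType) (a : nat -> R) (p : nat) (lam : R) :
  (forall n, a (p * n)%N = lam * a n) -> forall K n, a (p ^ K * n)%N = lam ^+ K * a n.
Proof.
move=> Ha; elim=> [|K IH] n; first by rewrite expn0 mul1n expr0 mul1r.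
by rewrite expnS -mulnA Ha IH exprS mulrA.
Qed.

Theorem mainTheorem7 (R : realType) (p : nat) (A B : {poly R}) (lamp : R) :
  (2 <= p)%N ->
  B.[0] != 0 ->
  (size A < size B)%N ->
  A != 0 ->
  lamp != 0 ->
  eigenU p A B lamp ->
  (forall z : R[i], is_pole A B z -> exists n : nat, (0 < n)%N /\ n.-unity_root z) /\
  (forall L : nat, is_level A B L ->
     forall m : nat, (0 < m)%N -> exists lam : R, eigenU (p + m * L)%N A B lam) /\
  (forall N : nat, exists q : nat,
     (N < q)%N /\ prime q /\ exists lam : R, eigenU q A B lam).
Proof.
move=> p2 B0' sAB An0 lam0 Heig.
have p0 : (0 < p)%N by apply: leq_trans p2.
set a := taylor A B.
have B0 : B`_0 != 0 by rewrite -horner_coef0.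
have HB n : conv B a n = A`_n by apply: taylor_conv.
have Bn0 : B != 0 by apply: contraNneq B0 => ->; rewrite coef0.
set G := gcdp A B.
set A0 := A %/ G.
set D := B %/ G.
have EA : A = A0 * G by rewrite divpK // dvdp_gcdl.
have EB : B = D * G by rewrite divpK // dvdp_gcdr.
have G0 : G`_0 != 0 by apply: contraNneq B0; rewrite EB coef0M => ->; rewrite mulr0.
have D0 : D`_0 != 0 by apply: contraNneq B0; rewrite EB coef0M => ->; rewrite mul0r.
have Gn0 : G != 0 by apply: contraNneq G0 => ->; rewrite coef0.
have Dn0 : D != 0 by apply: contraNneq D0 => ->; rewrite coef0.
have A0n0 : A0 != 0 by apply: contraNneq An0; rewrite EA => ->; rewrite mul0r.
have HD n : conv D a n = A0`_n.
  apply: (@conv_cancel _ G _ (pseq A0) G0) => k.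
  by rewrite -conv_mul mulrC -EB HB conv_pseq mulrC -EA.
have sAD : (size A0 < size D)%N.
  move: sAB; rewrite EA EB !size_mul //.
  have sG : (0 < size G)%N by rewrite lt0n size_poly_eq0.
  by move: sG; case: (size G) => // s _; rewrite !addnS /= ltn_add2r.
have cop : coprimep A0 D by apply: coprimep_div_gcd; rewrite An0.
set rc := real_complex R.
have poleE z : is_pole A B z = root (map_poly rc D) z by [].
have [K K0 HK] : exists2 K, (0 < K)%N & forall z, root (map_poly rc D) z -> z ^+ (p ^ K) = z.
  apply: (@roots_pow _ (map_poly rc A0) (map_poly rc D) (fun k => rc (a k)) p (rc lamp)) => //.
  - by rewrite fmorph_eq0.
  - by rewrite coef_map fmorph_eq0.
  - by rewrite coprimep_map.
  - by move=> n; rewrite -conv_map HD coef_map.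
  - by move=> n; rewrite /a /rc Heig rmorphM.
have pK1 : (1 < p ^ K)%N.
  apply: leq_trans p2 _; rewrite -{1}(expn1 p) leq_pexp2l //.
set T0 := (p ^ K).-1.
have T0p : (0 < T0)%N by rewrite /T0 -ltnS prednK // ltnW.
have HT0 z : root (map_poly rc D) z -> z ^+ T0 = 1.
  move=> rz; have z0 : z != 0.
    apply: contraNneq (D0) => z0; move: rz; rewrite z0 /root horner_coef0 coef_map.
    by rewrite fmorph_eq0.
  apply: (mulIf z0); rewrite mul1r -exprSr /T0 prednK ?HK //; exact: ltnW.
have HaK := @iter_eig R a p lamp Heig K.
have pKT0 : ((p ^ K) %% T0 = 1 %% T0)%N.
  by rewrite -{1}(prednK (ltnW pK1)) -/T0 -addn1 modnDl.
split; [|split].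
- move=> z; rewrite poleE => rz; exists T0; split => //.
  by rewrite unity_rootE HT0.
- move=> L [L0 [Ldiv _]] m m0.
  set T := gcdn L T0.
  have Tp : (0 < T)%N by rewrite gcdn_gt0 L0.
  have HT z : root (map_poly rc D) z -> z ^+ T = 1.
    move=> rz; have [n pn nd] := prim_order_exists T0p (HT0 z rz).
    have nL : (n %| L)%N by apply: (Ldiv z n) pn; exact: rz.
    by apply/eqP; rewrite -(prim_order_dvd pn) dvdn_gcd nL nd.
  have Hrep := @repr_T R a D A0 D0 HD sAD A0n0 T Tp HT.
  have TL : (T %| L)%N by apply: dvdn_gcdl.
  have TT0 : (T %| T0)%N by apply: dvdn_gcdr.
  have pKT : ((p ^ K) %% T = 1 %% T)%N.
    move: TT0 => /dvdnP [j Ej].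
    by rewrite -(prednK (ltnW pK1)) -/T0 -addn1 Ej modnMDl.
  have qT : ((p + m * L) %% T = p %% T)%N.
    move: TL => /dvdnP [j Ej]; by rewrite Ej mulnA addnC modnMDl.
  have [mu Hmu] := @eig_final R a T (p ^ K) p (p + m * L) (lamp ^+ K) lamp Tp pK1 pKT p0 qT Hrep HaK Heig.
  by exists mu.
- move=> N.
  have [q [qN qp qT]] := @prime_1mod T0 N T0p.
  have Hrep := @repr_T R a D A0 D0 HD sAD A0n0 T0 T0p HT0.
  have qT' : (q %% T0 = (p ^ K) %% T0)%N by rewrite qT pKT0.
  have pK0 : (0 < p ^ K)%N by apply: ltnW.
  have [mu Hmu] := @eig_final R a T0 (p ^ K) (p ^ K) q (lamp ^+ K) (lamp ^+ K) T0p pK1 pKT0 pK0 qT' Hrep HaK HaK.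
  by exists q; split => //; split => //; exists mu.
Qed.
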